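(* For every integer $n\geq 1$, $$c_n(231,132 : 231)=c_n(312,213 : 312)=\begin{cases}k^2+1 & \text{if } n=2k,\\ k^2+k+1 & \text{if } n=2k+1.\end{cases}$$
   Context: $S_n$ is the symmetric group on $[n]=\{1,\dots,n\}$, and a permutation $\pi\in S_n$ is written in one-line notation $\pi=\pi_1\pi_2\cdots\pi_n$ with $\pi_i=\pi(i)$. For $\tau\in S_k$, $k\le n$, $\pi$ contains $\tau$ if there are indices $i_1<\dots<i_k$ with $\pi_{i_s}>\pi_{i_t}$ iff $\tau_s>\tau_t$ for all $1\le s<t\le k$; otherwise $\pi$ avoids $\tau$. $\pi^2$ denotes the composition $\pi\circ\pi$. For patterns $\sigma_1,\sigma_2,\rho$, $c_n(\sigma_1,\sigma_2 : \rho)$ denotes the number of permutations $\pi\in S_n$ such that $\pi$ avoids both $\sigma_1$ and $\sigma_2$ and $\pi^2$ avoids $\rho$. *)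

(* Defs.v *)
From mathcomp Require Import all_boot all_fingroup.
Set Implicit Arguments. Unset Strict Implicit. Unset Printing Implicit Defensive.

(* Permutations of [n] are represented as {perm 'I_n} (values shifted by -1;
   shifting does not affect pattern containment). One-line notation:
   pi_i = pi i. pi^2 = pi o pi = (pi * pi)%g. *)

Definition contains (n : nat) (pi : {perm 'I_n}) (tau : seq nat) : bool :=
  [exists f : {ffun 'I_(size tau) -> 'I_n},
    [forall s : 'I_(size tau), forall t : 'I_(size tau),
       (s < t) ==>
         ((f s < f t) &&
          ((pi (f t) < pi (f s)) == (nth 0 tau t < nth 0 tau s)))]].

Definition avoids (n : nat) (pi : {perm 'I_n}) (tau : seq nat) : bool :=
  ~~ contains pi tau.

Definition c_count (n : nat) (s1 s2 rho : seq nat) : nat :=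
  #|[set pi : {perm 'I_n} |
      [&& avoids pi s1, avoids pi s2 & avoids (pi * pi)%g rho]]|.

(* Main.v *)
Require Import Defs.
From mathcomp Require Import all_boot all_fingroup zify.
Set Implicit Arguments. Unset Strict Implicit. Unset Printing Implicit Defensive.

Definition form (m t i : nat) : nat :=
  if i < m - t then m.-1 - i else if i < m then i - (m - t) else i.
Definition cond (m t : nat) : bool :=
  ((m == 0) && (t == 0)) || ((0 < t) && (t.*2 <= m)).
Definition gform (m t i : nat) : nat :=
  if i < t then t.-1 - i else if i < m - t then i else if i < m then (m + m - t).-1 - i else i.

Ltac noif a := match a with context [if _ then _ else _] => fail 1 | _ => idtac end.
Ltac des_if := repeat (match goal with
 | |- context [if ?a < ?b then _ else _] => noif a; case: (ltnP a b) => ?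
 end; cbn iota).

Lemma form_gform m t i : cond m t -> form m t (form m t i) = gform m t i.
Proof.
move=> /orP [/andP [/eqP -> /eqP ->]|/andP [H1 H2]]; rewrite /form /gform.
  by des_if; lia.
des_if; lia.
Qed.

Lemma formV m t i j k : cond m t -> i < j -> j < k ->
  form m t j < form m t i \/ form m t j < form m t k.
Proof.
move=> /orP [/andP [/eqP -> /eqP ->]|/andP [H1 H2]] ??; rewrite /form; des_if; lia.
Qed.

Lemma formG m t a b c : cond m t -> a < b -> b < c ->
  form m t (form m t c) < form m t (form m t a) ->
  form m t (form m t a) < form m t (form m t b) -> False.
Proof.
move=> C; rewrite !form_gform //; move: C.
move=> /orP [/andP [/eqP -> /eqP ->]|/andP [H1 H2]] ??; rewrite /gform; des_if; lia.
Qed.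

Lemma form_inj m t n i j : m <= n -> i < n -> j < n -> form m t i = form m t j -> i = j.
Proof. move=> ???; rewrite /form; des_if; lia. Qed.

Lemma form_lt m t n i : m <= n -> i < n -> form m t i < n.
Proof. move=> ??; rewrite /form; des_if; lia. Qed.

Lemma charac (F : nat -> nat) (n : nat) :
  (forall i, i < n -> F i < n) ->
  (forall i j, i < n -> j < n -> F i = F j -> i = j) ->
  (forall v, v < n -> exists2 j, j < n & F j = v) ->
  (forall i j k, i < j -> j < k -> k < n -> F j < F i \/ F j < F k) ->
  (forall a b c, a < b -> b < c -> c < n -> F (F c) < F (F a) -> F (F a) < F (F b) -> False) ->
  exists m t, [/\ m <= n, cond m t & forall i, i < n -> F i = form m t i].
Proof.
elim: n => [|n IH] Hlt Hinj Hsur HV HG.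
  by exists 0, 0; split.
have [Fn|Fn] := eqVneq (F n) n.
  have [|||||m [t [Hm Hc Hf]]] := IH.
  - move=> i Hi; have := Hlt i (ltnW Hi) => H.
    have : F i != n by apply/eqP => E; have := Hinj i n; rewrite E Fn; lia.
    lia.
  - by move=> i j ??; apply: Hinj; lia.
  - move=> v Hv; have [j Hj Fj] := Hsur v (ltnW Hv); exists j => //.
    have : j != n by apply/eqP => E; move: Fj; rewrite E Fn; lia.
    lia.
  - by move=> i j k ???; apply: HV; lia.
  - by move=> a b c ???; apply: HG; lia.
  exists m, t; split => //; first lia.
  move=> i Hi; have [Hin|Hni] := ltnP i n; first exact: Hf.
  have -> : i = n by lia.
  by rewrite Fn /form; des_if; lia.
set L := F n.
have HLe : F n = L by [].
clearbody L.
have HLn : L < n by have := Hlt n (ltnSn n); rewrite HLe; move: Fn; rewrite HLe; lia.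
have F0 : F 0 = n.
  have [p Hp Fp] := Hsur n (ltnSn n).
  have [Ep|Hp0] := eqVneq p 0; first by rewrite -Ep.
  have [Epn|Hpn] := eqVneq p n; first by move: Fp; rewrite Epn; lia.
  have := HV 0 p n (ltac:(lia)) (ltac:(lia)) (ltnSn n); have := Hlt 0 (ltac:(lia)).
  have := Hlt n (ltnSn n); rewrite Fp; lia.
set K := n - L.
have HK : K = n - L by [].
clearbody K.
have step1 : forall i, i < K -> F i = n - i.
  have : forall k i, i < k -> i < K -> F i = n - i.
    elim=> [//|k IHk] i Hik HiK.
    have [/IHk|Eik] := ltnP i k; first by apply.
    have E : i = k by lia.
    subst i.
    have [j Hj Fj] := Hsur (n - k) (ltac:(lia)).
    have [Hjk|Hkj] := ltnP j k.
      by move: Fj; rewrite (IHk j Hjk (ltac:(lia))); lia.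
    have [Ejk|Njk] := eqVneq j k; first by move: Fj; rewrite Ejk.
    have [Ejn|Njn] := eqVneq j n; first by move: Fj; rewrite Ejn; lia.
    have := HV k j n (ltac:(lia)) (ltac:(lia)) (ltnSn n); rewrite Fj.
    case=> [H|]; last lia.
    have Hk := Hlt k (ltac:(lia)).
    have Hi' : n - F k < k by lia.
    have := IHk _ Hi' (ltac:(lia)).
    have -> : n - (n - F k) = F k by lia.
    move/(Hinj (n - F k) k (ltac:(lia)) (ltac:(lia))); lia.
  by move=> H i Hi; apply: (H i.+1).
have C : forall j, j < n.+1 -> L < F j -> j < K.
  move=> j Hj HLj; have Hj' := Hlt j Hj.
  have Hi : n - F j < K by lia.
  have := step1 _ Hi; have -> : n - (n - F j) = F j by lia.
  move/(Hinj (n - F j) j (ltac:(lia)) Hj); lia.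
have HLK : L < K.
  rewrite ltnNge; apply/negP => HKL.
  have [d Hd Fd] := Hsur 0 (ltac:(lia)).
  have Hd0 : 0 < d by move: Fd; case: d {Hd} => //; rewrite F0; lia.
  have Hdn : d < n.
    have [Edn|] := eqVneq d n; last lia.
    by move: Fd; rewrite Edn; lia.
  have FL : F L < L.
    have := Hlt L (ltac:(lia)); have [E|NE] := eqVneq (F L) L.
      by have := Hinj L n (ltac:(lia)) (ltnSn n); rewrite E; lia.
    have := C L (ltac:(lia)); lia.
  apply: (HG 0 d n Hd0 Hdn (ltnSn n)); rewrite F0 ?Fd ?F0 HLe; lia.
have FK : F K = 0.
  have [EKn|NKn] := eqVneq K n.
    by rewrite EKn HLe; lia.
  set y := F K.
  have Hy : F K = y by [].
  clearbody y.
  have [//|y0] := eqVneq y 0.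
  have HyL : y <= L by have := C K (ltac:(lia)); rewrite Hy; lia.
  have HyL' : y != L.
    apply/eqP => E; have := Hinj K n (ltac:(lia)) (ltnSn n); rewrite Hy HLe E; lia.
  have [d Hd Fd] := Hsur 0 (ltac:(lia)).
  have HdK : K <= d.
    rewrite leqNgt; apply/negP => Hd'; move: Fd; rewrite step1 //; lia.
  have NdK : d != K by apply/eqP => E; move: Fd; rewrite E Hy; lia.
  have Ndn : d != n by apply/eqP => E; move: Fd; rewrite E HLe; lia.
  exfalso; apply: (HG K d n (ltac:(lia)) (ltac:(lia)) (ltnSn n));
    rewrite ?Fd ?F0 ?HLe ?Hy ?(step1 L HLK) ?(step1 y (ltac:(lia))); lia.
have incr : forall i j, K <= i -> i < j -> j <= n -> F i < F j.
  move=> i j HKi Hij Hjn.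
  have [EiK|NiK] := eqVneq i K.
    rewrite EiK FK lt0n; apply/eqP => E.
    have := Hinj j K (ltac:(lia)) (ltac:(lia)); rewrite E FK; lia.
  have := HV K i j (ltac:(lia)) Hij (ltac:(lia)); rewrite FK; lia.
have low : forall k, K + k <= n -> k <= F (K + k).
  elim=> [|k IHk] Hk; first lia.
  have := IHk (ltac:(lia)); have := incr (K + k) (K + k.+1) (ltac:(lia)) (ltac:(lia)) Hk.
  lia.
have up : forall k, k <= n - K -> F (n - k) + k <= L.
  elim=> [|k IHk] Hk; first by rewrite subn0 addn0 HLe.
  have := IHk (ltac:(lia)); have := incr (n - k.+1) (n - k) (ltac:(lia)) (ltac:(lia)) (ltac:(lia)).
  lia.
exists n.+1, L.+1; split => //.
  rewrite /cond; apply/orP; right; apply/andP; split => //; lia.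
move=> i Hi; rewrite /form; des_if.
- rewrite step1; lia.
- have := low (i - K) (ltac:(lia)); have := up (n - i) (ltac:(lia)).
  have -> : n - (n - i) = i by lia.
  have -> : K + (i - K) = i by lia.
  lia.
- lia.
Qed.

Lemma contains3 n (p : {perm 'I_n}) (a b c : nat) :
  contains p [:: a; b; c] = [exists i : 'I_n, exists j : 'I_n, exists k : 'I_n,
     [&& i < j, j < k, (p j < p i) == (b < a), (p k < p i) == (c < a)
       & (p k < p j) == (c < b)]].
Proof.
apply/existsP/existsP.
  case=> f /forallP H.
  pose s0 : 'I_3 := @Ordinal 3 0 isT.
  pose s1 : 'I_3 := @Ordinal 3 1 isT.
  pose s2 : 'I_3 := @Ordinal 3 2 isT.
  have H01 := implyP (forallP (H s0) s1) isT.
  have H02 := implyP (forallP (H s0) s2) isT.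
  have H12 := implyP (forallP (H s1) s2) isT.
  case/andP: H01 => [L01 E01]; case/andP: H02 => [L02 E02]; case/andP: H12 => [L12 E12].
  exists (f s0); apply/existsP; exists (f s1); apply/existsP; exists (f s2).
  by rewrite L01 L12 E01 E02 E12.
case=> i /existsP [j /existsP [k /and5P [Hij Hjk H1 H2 H3]]].
exists [ffun s : 'I_3 => nth i [:: i; j; k] s].
apply/forallP => s; apply/forallP => t; apply/implyP; rewrite !ffunE.
case: s t => [[|[|[|?]]] ?] [[|[|[|?]]] ?] //= _; rewrite ?Hij ?Hjk ?H1 ?H2 ?H3 //=.
by rewrite (ltn_trans Hij Hjk).
Qed.

Definition wrev n : {perm 'I_n} := perm (@rev_ord_inj n).
Definition cj n (p : {perm 'I_n}) : {perm 'I_n} := (wrev n * p * wrev n)%g.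

Lemma wrevE n (x : 'I_n) : wrev n x = rev_ord x.
Proof. by rewrite permE. Qed.

Lemma wrevK n (x : 'I_n) : wrev n (wrev n x) = x.
Proof. by rewrite !wrevE rev_ordK. Qed.

Lemma cjE n (p : {perm 'I_n}) x : cj p x = wrev n (p (wrev n x)).
Proof. by rewrite /cj !permM. Qed.

Lemma wrev_lt n (x y : 'I_n) : (wrev n x < wrev n y) = (y < x).
Proof.
rewrite !wrevE /=; have := ltn_ord x; have := ltn_ord y.
case: n x y => [|n] [x Hx] [y Hy] /= ? ?; first by [].
apply/idP/idP; lia.
Qed.

Lemma cjK n (p : {perm 'I_n}) : cj (cj p) = p.
Proof. by apply/permP => x; rewrite !cjE !wrevK. Qed.

Lemma cjM n (p : {perm 'I_n}) : (cj p * cj p)%g = cj (p * p)%g.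
Proof. by apply/permP => x; rewrite !permM wrevK. Qed.

Lemma cj_inj n : injective (@cj n).
Proof. by move=> p q E; rewrite -(cjK p) E cjK. Qed.

Lemma contains_cj n (p : {perm 'I_n}) a b c a' b' c' :
  (b' < a') = (c < b) -> (c' < a') = (c < a) -> (c' < b') = (b < a) ->
  contains (cj p) [:: a; b; c] = contains p [:: a'; b'; c'].
Proof.
move=> E1 E2 E3; rewrite !contains3 E1 E2 E3.
apply/existsP/existsP.
  case=> i /existsP [j /existsP [k /and5P [Hij Hjk H1 H2 H3]]].
  exists (wrev n k); apply/existsP; exists (wrev n j); apply/existsP; exists (wrev n i).
  move: H1 H2 H3; rewrite !cjE !wrev_lt Hij Hjk /= => /eqP <- /eqP <- /eqP <-.
  by rewrite !eqxx.
case=> i /existsP [j /existsP [k /and5P [Hij Hjk H1 H2 H3]]].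
exists (wrev n k); apply/existsP; exists (wrev n j); apply/existsP; exists (wrev n i).
rewrite !cjE !wrevK !wrev_lt Hij Hjk /=.
by move: H1 H2 H3 => /eqP <- /eqP <- /eqP <-; rewrite !eqxx.
Qed.

Lemma part1 n : c_count n [:: 2; 3; 1] [:: 1; 3; 2] [:: 2; 3; 1] =
    c_count n [:: 3; 1; 2] [:: 2; 1; 3] [:: 3; 1; 2].
Proof.
rewrite /c_count.
set A := [set pi : {perm 'I_n} | _]; set B := [set pi : {perm 'I_n} | _].
have HB : forall p, (cj p \in B) = (p \in A).
  move=> p; rewrite !inE /avoids cjM.
  by rewrite (@contains_cj _ p 3 1 2 2 3 1) // (@contains_cj _ p 2 1 3 1 3 2) //
    (@contains_cj _ (p * p)%g 3 1 2 2 3 1).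
have -> : B = (@cj n) @: A.
  apply/setP => s; apply/idP/imsetP.
    by move=> Hs; exists (cj s); rewrite ?cjK // -HB cjK.
  by case=> p Hp ->; rewrite HB.
by rewrite card_imset //; apply: cj_inj.
Qed.

Lemma sum_half (m K : nat) :
  \sum_(t < K) ((0 < t) && (t.*2 <= m)) = minn (m./2) K.-1.
Proof.
have Hm := odd_double_half m.
elim: K => [|K IH]; first by rewrite big_ord0.
rewrite big_ord_recr /= IH.
case: K {IH} => [|K] /=; first by lia.
case: (leqP (K.+1).*2 m) => H /=; case: (odd m) Hm => /= Hm; lia.
Qed.

Lemma sum_halves (N : nat) :
  \sum_(m < N.+1) m./2 + 1 = (if odd N then (N./2) ^ 2 + N./2 + 1 else (N./2) ^ 2 + 1).
Proof.
elim: N => [|N IH]; first by rewrite big_ord_recr big_ord0.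
rewrite big_ord_recr /= -addnA (addnC _ 1) addnA IH.
have H1 := odd_double_half N.
have H2 := odd_double_half N.+1.
rewrite /= in H2.
case: (odd N) H1 H2 => /= H1 H2; nia.
Qed.

Lemma sum_cond (N : nat) :
  \sum_(m < N.+1) \sum_(t < N.+1) cond m t = \sum_(m < N.+1) m./2 + 1.
Proof.
rewrite addnC.
have -> : 1 = \sum_(m < N.+1) (m == 0 :> nat).
  by rewrite big_ord_recl /= big1.
rewrite -big_split /=; apply: eq_bigr => m _.
have -> : \sum_(t < N.+1) cond m t =
   \sum_(t < N.+1) (((nat_of_ord m == 0) && (nat_of_ord t == 0)) + ((0 < t) && (t.*2 <= m))).
  apply: eq_bigr => t _; rewrite /cond.
  by case: (nat_of_ord t) => [|t']; case: (nat_of_ord m) => [|m'] //=; case: (_ <= _).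
rewrite big_split /= sum_half big_ord_recl /= big1 ?andbF //=.
  rewrite andbT addn0; congr (_ + _).
  by have := ltn_ord m; have := odd_double_half m; case: (odd m) => /=; lia.
by move=> i _; rewrite andbF.
Qed.

Lemma form_uniq N m1 t1 m2 t2 : 0 < N -> cond m1 t1 -> cond m2 t2 -> m1 <= N -> m2 <= N ->
  (forall x, x < N -> form m1 t1 x = form m2 t2 x) -> m1 = m2 /\ t1 = t2.
Proof.
move=> HN C1 C2 H1 H2 H.
have E0 := H 0 HN.
move: C1 C2 E0 => /orP [/andP [/eqP E1 /eqP E2]|/andP [P1 Q1]] /orP [/andP [/eqP E3 /eqP E4]|/andP [P2 Q2]];
  rewrite /form; try subst; des_if; try lia.
move=> E0; have E1 := H m1.-1 (ltac:(lia)); move: E1; rewrite /form; des_if; lia.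
Qed.

Section Main.
Variable N' : nat.
Local Notation N := N'.+1.

Definition Fp (p : {perm 'I_N}) (i : nat) : nat := nat_of_ord (p (inord i)).

Definition dec_fun (m t : nat) (x : 'I_N) : 'I_N := inord (form m t x).

Lemma dec_inj (m : 'I_N.+1) t : injective (dec_fun m t).
Proof.
have Hm : m <= N := ltn_ord m.
move=> x y; rewrite /dec_fun => /(congr1 (@nat_of_ord N)); rewrite !inordK;
  try (apply: form_lt; [exact: Hm | exact: ltn_ord]).
by move/(form_inj Hm (ltn_ord x) (ltn_ord y)) => /val_inj.
Qed.

Definition decode (q : 'I_N.+1 * 'I_N.+1) : {perm 'I_N} := perm (@dec_inj q.1 q.2).

Lemma decodeE q (x : 'I_N) : nat_of_ord (decode q x) = form q.1 q.2 x.
Proof. have Hm : q.1 <= N := ltn_ord q.1. by rewrite permE /dec_fun inordK //; apply: form_lt. Qed.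

Definition Aset := [set pi : {perm 'I_N} |
      [&& avoids pi [:: 2; 3; 1], avoids pi [:: 1; 3; 2] & avoids (pi * pi)%g [:: 2; 3; 1]]].
Definition Tset := [set q : 'I_N.+1 * 'I_N.+1 | cond q.1 q.2].

Lemma decode_in q : q \in Tset -> decode q \in Aset.
Proof.
rewrite !inE => C; have Hm : q.1 <= N := ltn_ord q.1.
have V : forall i j k : 'I_N, i < j -> j < k ->
   nat_of_ord (decode q j) < nat_of_ord (decode q i) \/ nat_of_ord (decode q j) < nat_of_ord (decode q k).
  by move=> i j k ??; rewrite !decodeE; apply: formV.
have Sq : forall x : 'I_N, nat_of_ord ((decode q * decode q)%g x) = form q.1 q.2 (form q.1 q.2 x).
  by move=> x; rewrite permM !decodeE.
apply/and3P; split; rewrite /avoids contains3; apply/negP;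
  case/existsP => i /existsP [j /existsP [k /and5P [Hij Hjk H1 H2 H3]]]; move: H1 H2 H3 => /=.
- move=> /eqP H1 /eqP H2 /eqP H3; have := V i j k Hij Hjk; lia.
- move=> /eqP H1 /eqP H2 /eqP H3; have := V i j k Hij Hjk; lia.
- rewrite !Sq => /eqP H1 /eqP H2 /eqP H3.
  have Nij : form q.1 q.2 (form q.1 q.2 i) != form q.1 q.2 (form q.1 q.2 j).
    rewrite -!Sq; apply/eqP => /val_inj /perm_inj E; move: Hij; rewrite E; lia.
  move/eqP: Nij => Nij; apply: (formG C Hij Hjk); move: H1 H2 H3 => /= /negbT; rewrite -leqNgt => H1 H2 H3; [by move: H2 => /= | by rewrite ltn_neqAle H1 andbT; apply/eqP].
Qed.

Lemma FpE (p : {perm 'I_N}) (x : 'I_N) : Fp p x = p x.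
Proof. by rewrite /Fp inord_val. Qed.

Lemma FpFp (p : {perm 'I_N}) a : nat_of_ord ((p * p)%g (inord a)) = Fp p (Fp p a).
Proof. by rewrite permM /Fp inord_val. Qed.

Lemma in_decode p : p \in Aset -> exists2 q, q \in Tset & p = decode q.
Proof.
rewrite inE /avoids !contains3 => /and3P [/negP A1 /negP A2 /negP A3].
have Hlt : forall i, i < N -> Fp p i < N by move=> i _; exact: ltn_ord.
have Hinj : forall i j, i < N -> j < N -> Fp p i = Fp p j -> i = j.
  move=> i j Hi Hj /val_inj /perm_inj /(congr1 (@nat_of_ord N)); rewrite !inordK //.
have Hsur : forall v, v < N -> exists2 j, j < N & Fp p j = v.
  move=> v Hv; exists (nat_of_ord ((p^-1)%g (inord v))) => //.
  by rewrite FpE permKV inordK.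
have HV : forall i j k, i < j -> j < k -> k < N -> Fp p j < Fp p i \/ Fp p j < Fp p k.
  move=> i j k Hij Hjk Hk.
  have [H1|H1] := ltnP (Fp p j) (Fp p i); first by left.
  have [H2|H2] := ltnP (Fp p j) (Fp p k); first by right.
  exfalso.
  have Ei : Fp p i != Fp p j by apply/eqP => /Hinj; lia.
  have Ek : Fp p k != Fp p j by apply/eqP => /Hinj; lia.
  have Eik : Fp p i != Fp p k by apply/eqP => /Hinj; lia.
  have [H3|H3] := ltnP (Fp p k) (Fp p i).
    apply: A1; apply/existsP; exists (inord i); apply/existsP; exists (inord j);
      apply/existsP; exists (inord k).
    rewrite !inordK; try lia.
    rewrite -!/(Fp p _) /=; apply/and5P; split => //; apply/eqP; lia.
  apply: A2; apply/existsP; exists (inord i); apply/existsP; exists (inord j);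
    apply/existsP; exists (inord k).
  rewrite !inordK; try lia.
  rewrite -!/(Fp p _) /=; apply/and5P; split => //; apply/eqP; lia.
have HG : forall a b c, a < b -> b < c -> c < N ->
    Fp p (Fp p c) < Fp p (Fp p a) -> Fp p (Fp p a) < Fp p (Fp p b) -> False.
  move=> a b c Hab Hbc Hc H1 H2.
  apply: A3; apply/existsP; exists (inord a); apply/existsP; exists (inord b);
    apply/existsP; exists (inord c).
  rewrite !inordK; try lia.
  rewrite !FpFp /=; apply/and5P; split => //; apply/eqP; lia.
have [m [t [Hm Hc Hf]]] := charac Hlt Hinj Hsur HV HG.
have Ht : t < N.+1 by move: Hc; rewrite /cond; case/orP => /andP [] /eqP; lia.
exists (inord m, inord t); first by rewrite inE /= !inordK.
apply/permP => x; apply/val_inj; rewrite /= decodeE /= !inordK // -Hf // FpE //.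
Qed.

Lemma decode_inj : {in Tset &, injective decode}.
Proof.
move=> [m1 t1] [m2 t2]; rewrite !inE /= => C1 C2 E.
have H : forall x, x < N -> form m1 t1 x = form m2 t2 x.
  move=> x Hx; have := congr1 (fun p : {perm 'I_N} => nat_of_ord (p (Ordinal Hx))) E.
  by rewrite /= !decodeE.
have [E1 E2] := form_uniq (ltn0Sn N') C1 C2 (ltn_ord m1) (ltn_ord m2) H.
by congr pair; apply: val_inj.
Qed.

Lemma count_main : #|Aset| = \sum_(m < N.+1) m./2 + 1.
Proof.
have -> : Aset = decode @: Tset.
  apply/setP => p; apply/idP/imsetP.
    by case/in_decode => q Hq ->; exists q.
  by case=> q Hq ->; apply: decode_in.
rewrite (card_in_imset decode_inj) -sum_cond.
rewrite -sum1_card pair_big /=.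
rewrite big_mkcond /=; apply: eq_bigr => [[m t]] _; rewrite inE /=.
by case: (cond m t).
Qed.
End Main.

Theorem theorem3p3 (n : nat) : 1 <= n ->
  c_count n [:: 2; 3; 1] [:: 1; 3; 2] [:: 2; 3; 1] =
    c_count n [:: 3; 1; 2] [:: 2; 1; 3] [:: 3; 1; 2] /\
  c_count n [:: 2; 3; 1] [:: 1; 3; 2] [:: 2; 3; 1] =
    (if odd n then (n./2) ^ 2 + n./2 + 1 else (n./2) ^ 2 + 1).
Proof.
case: n => [//|N'] _; split; first exact: part1.
by rewrite /c_count -/(Aset N') count_main sum_halves.
Qed.
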